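(* Let $n\ge2$, $0<\eta\le\frac14$, and let $A$ be a real symmetric non-negative $n\times n$ matrix with $\det(A)\ge(1-\sqrt\eta)^2$ and $\operatorname{tr}(A)\le n(1+\eta)^{2/n}$. Then $$\|A-\mathrm{Id}\|^2\le4(n-1)^2\sqrt\eta\left(1+\frac{n+10}n\sqrt\eta\right).$$
   Context: $\|\cdot\|$ denotes the Hilbert–Schmidt (Frobenius) norm, $\|B\|^2=\operatorname{tr}(B^tB)$. *)

(* Defs.v *)
From HB Require Import structures.
From mathcomp Require Import all_boot all_order all_algebra.
Set Implicit Arguments. Unset Strict Implicit. Unset Printing Implicit Defensive.
Import Order.TTheory GRing.Theory Num.Theory.
Local Open Scope ring_scope.

Definition symmetric_mx (R : rcfType) (n : nat) (A : 'M[R]_n) : Prop := A^T = A.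

(* non-negative (positive semidefinite) matrix: v A v^T >= 0 for all v *)
Definition psd_mx (R : rcfType) (n : nat) (A : 'M[R]_n) : Prop :=
  forall v : 'rV[R]_n, 0 <= (v *m A *m v^T) 0 0.

Definition hs_norm2 (R : rcfType) (n : nat) (B : 'M[R]_n) : R := \tr (B^T *m B).

(* Main.v *)
Require Import Defs.
From HB Require Import structures.
From mathcomp Require Import all_boot all_order all_algebra.
From mathcomp Require Import complex.
From mathcomp Require Import ring lra.
Local Open Scope ring_scope.
Import Order.TTheory GRing.Theory Num.Theory.

Lemma bern (R : realDomainType) (x : R) n : 0 <= x -> 1 + n%:R * x <= (1+x)^+n.
Proof.
move=> x0; elim: n => [|n IH]; first by rewrite mul0r addr0 expr0.
rewrite exprS -natr1.
have h0 : 0 <= n%:R :> R by [].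
set y := (1+x)^+n in IH *. nra.
Qed.

Section P. Variable (R : realFieldType) (n : nat) (l : 'I_n -> R).
Lemma pairs_sum :
  (\sum_i l i) ^+ 2 - \sum_i l i ^+ 2 =
  \sum_(p : 'I_n * 'I_n | p.1 != p.2) (l p.1 * l p.2).
Proof.
rewrite -(pair_big_dep xpredT (fun i j => i != j) (fun i j => l i * l j)) /=.
rewrite expr2 big_distrlr /= -sumrB; apply: eq_bigr => i _.
rewrite (bigD1 i) //= expr2 addrC addrK.
by apply: eq_bigl => j; rewrite eq_sym.
Qed.

Lemma pairs_card : #|[pred p : 'I_n * 'I_n | p.1 != p.2]| = (n * n.-1)%N.
Proof.
rewrite -sum1_card.
rewrite -(pair_big_dep xpredT (fun i j => i != j) (fun i j => 1%N)) /=.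
rewrite (eq_bigr (fun _ => n.-1)) ?sum_nat_const ?card_ord //.
move=> i _; rewrite sum1_card.
by have := cardC1 i; rewrite card_ord => <-; apply: eq_card => j; rewrite !inE eq_sym.
Qed.

Lemma pairs_prod :
  \prod_(p : 'I_n * 'I_n | p.1 != p.2) (l p.1 * l p.2) = (\prod_i l i) ^+ (2 * n.-1).
Proof.
rewrite -(pair_big_dep xpredT (fun i j => i != j) (fun i j => l i * l j)) /=.
have c i : #|[pred j : 'I_n | j != i]| = n.-1.
  by have := cardC1 i; rewrite card_ord => <-; apply: eq_card => j; rewrite !inE.
rewrite (eq_bigr (fun i => l i ^+ n.-1 * \prod_(j | i != j) l j)); last first.
  move=> i _; rewrite big_split /=; congr (_ * _).
  by rewrite -(c i) -prodr_const; rewrite (eq_bigl (fun j => j != i)) // => j; rewrite eq_sym.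
rewrite big_split /= prodrXl.

rewrite (@exchange_big_dep _ _ _ _ _ _ _ xpredT (fun i j => i != j) xpredT) /=; last by [].
rewrite [X in _ * X](eq_bigr (fun j => l j ^+ n.-1)); last first.
  move=> j _; rewrite -(c j) -prodr_const; by rewrite (eq_bigl (fun i => i != j)).
by rewrite prodrXl -expr2 -exprM mulnC.
Qed.
End P.


Section H. Variable R : realFieldType.
Lemma hSS (S X : R) : 0 <= S -> S <= X -> 2 <= X -> S ^+ 2 - 2 * S <= X ^+ 2 - 2 * X.
Proof. move=> *; nra. Qed.
Lemma hXX (X Y : R) : 1 <= X -> X <= Y -> (X - 1) ^+ 2 <= (Y - 1) ^+ 2.
Proof. move=> *; nra. Qed.
Lemma hmt (nn : R) : 2 <= nn -> 6 * nn <= (nn - 1) * (nn + 10).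
Proof. move=> *; nra. Qed.
Lemma hkey (s : R) : 0 < s -> s <= 2^-1 -> 1 <= (1 + 2 * s + 8 * s ^+ 2) * (1 - s) ^+ 2.
Proof.
move=> s0 s1.
have : 0 <= s ^+ 2 * (5 - 14 * s + 8 * s ^+ 2) by apply: mulr_ge0; nra.
move=> H; nra.
Qed.
Lemma hu (u : R) : 0 <= u -> 0 < 1 - u -> 0 <= (1 - u) * (1 + u) /\ (1 - u) * (1 + u) <= 1.
Proof. move=> *; split; nra. Qed.
Lemma hK (X A B : R) : 0 <= X -> 0 <= B -> X * A <= 1 -> 1 <= A * B -> X <= B.
Proof. move=> *; nra. Qed.
Lemma hc (m s : R) : 1 <= m -> 0 < s -> s <= 2^-1 ->
  2 * m * (2 * s ^+ 2 + s ^+ 4) + (2 * s ^+ 2 + s ^+ 4) ^+ 2 <= 6 * m * s ^+ 2.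
Proof.
move=> m1 s0 s1.
have s2 : s ^+ 2 <= 4^-1 by nra.
set q := s ^+ 2 in s2 *.
have -> : s ^+ 4 = q ^+ 2 by rewrite /q -exprM.
have q0 : 0 <= q by rewrite /q sqr_ge0.
have h1 : (2 + q) ^+ 2 <= 6 by nra.
have h2 : q * (2 + q) ^+ 2 <= 3 / 2.
  have : 0 <= (4^-1 - q) * (2 + q) ^+ 2 by apply: mulr_ge0; [lra | exact: sqr_ge0].
  nra.
have h3 : 2 * m * q <= m / 2 by nra.
have -> : 2 * m * (2 * q + q ^+ 2) + (2 * q + q ^+ 2) ^+ 2 =
   q * (4 * m + (2 * m * q + q * (2 + q) ^+ 2)) by ring.
have -> : 6 * m * q = q * (4 * m + 2 * m) by ring.
apply: (ler_wpM2l q0); lra.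
Qed.
Lemma hfin (m s t c : R) : 1 <= m -> 0 < s -> 6 <= m * t ->
  2 * m * c + c ^+ 2 <= 6 * m * s ^+ 2 ->
  2 * m * c + c ^+ 2 + 4 * m * s + 16 * m * s ^+ 2 <= 4 * m ^+ 2 * s * (1 + t * s).
Proof.
move=> m1 s0 mt hc.
have a : 0 <= m * s * (m - 1) by apply: mulr_ge0; [apply: mulr_ge0|]; lra.
have b : 0 <= m * s ^+ 2 * (m * t - 6).
  by apply: mulr_ge0; [apply: mulr_ge0; [lra | exact: sqr_ge0]|]; lra.
have e1 : m * s * (m - 1) = m ^+ 2 * s - m * s by ring.
have e2 : m * s ^+ 2 * (m * t - 6) = m ^+ 2 * t * s ^+ 2 - 6 * m * s ^+ 2 by ring.
have e3 : 4 * m ^+ 2 * s * (1 + t * s) = 4 * (m ^+ 2 * s) + 4 * (m ^+ 2 * t * s ^+ 2) by ring.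
have d : 0 <= m * s ^+ 2 by apply: mulr_ge0; [lra | exact: sqr_ge0].
rewrite e3; lra.
Qed.
End H.

Lemma scalar_bound (R : rcfType) (n : nat) (s r : R) (l : 'I_n -> R) :
 (2 <= n)%N -> 0 < s -> s <= 2^-1 -> 0 <= r -> r ^+ n = (1 + s^+2)^+2 ->
 (forall i, 0 <= l i) -> (1 - s)^+2 <= \prod_i l i -> \sum_i l i <= n%:R * r ->
 \sum_i l i ^+ 2 - 2 * \sum_i l i + n%:R <=
   4 * ((n-1)%:R)^+2 * s * (1 + (n+10)%:R / n%:R * s).
Proof.
move=> n2 s0 s12 r0 rn l0 Pge Sle.
set S := \sum_i l i in Sle *; set Q := \sum_i l i ^+ 2; set Pi := \prod_i l i in Pge *.
set nn : R := n%:R.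
have nn2 : 2 <= nn by rewrite /nn (ler_nat R 2 n).
have nn0 : 0 < nn by lra.
set N := (n * n.-1)%N.
have NR : N%:R = nn * (nn - 1) :> R.
  by rewrite /N natrM -subn1 natrB ?(leq_trans _ n2).
have N0 : (0 < N)%N.
  rewrite /N muln_gt0; apply/andP; split; first exact: leq_trans n2.
  by rewrite -subn1 subn_gt0.
have NR0 : 0 < N%:R :> R by rewrite ltr0n.
have Epos : 0 <= S ^+ 2 - Q.
  by rewrite pairs_sum sumr_ge0 // => p _; rewrite mulr_ge0.
set h := (S ^+ 2 - Q) / N%:R.
have h0 : 0 <= h by rewrite /h divr_ge0 // ltW.
have AG : Pi ^+ (2 * n.-1) <= h ^+ N.
  have := @leif_AGM R _ [pred p : 'I_n * 'I_n | p.1 != p.2] (fun p => l p.1 * l p.2).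
  rewrite pairs_card -/N => /(_ _) [].
    by move=> p _; rewrite mulr_ge0.
  move=> H _; move: H.
  have -> : \prod_(i in [pred p : 'I_n * 'I_n | p.1 != p.2]) (l i.1 * l i.2) =
            Pi ^+ (2 * n.-1).
    by rewrite -pairs_prod; apply: eq_bigl => p; rewrite inE.
  have -> : \sum_(i in [pred p : 'I_n * 'I_n | p.1 != p.2]) (l i.1 * l i.2) = S^+2 - Q.
    by rewrite pairs_sum; apply: eq_bigl => p; rewrite inE.
  by [].
set u := (2 * s + 8 * s ^+ 2) / nn.
have nu : nn * u = 2 * s + 8 * s ^+ 2 by rewrite /u mulrC divfK ?gt_eqF.
have u0 : 0 <= u by rewrite /u divr_ge0 ?ltW //; have := sqr_ge0 s; lra.
have key := @hkey R s s0 s12.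
have K : 0 < 1 - u -> (1 - u) ^+ n <= (1 - s) ^+ 2.
  move=> u1.
  have b := @bern R u n u0.
  have X0 : 0 <= (1 - u) ^+ n by rewrite exprn_ge0 // ltW.
  have XY : (1 - u) ^+ n * (1 + u) ^+ n <= 1.
    by rewrite -exprMn; have [? ?] := @hu R u u0 u1; apply: exprn_ile1.
  have : (1 - u) ^+ n * (1 + 2 * s + 8 * s ^+ 2) <= 1.
    apply: le_trans; last exact: XY; rewrite ler_pM2l ?lt0r; last first.
    - by rewrite X0 andbT expf_eq0 negb_and gt_eqF ?orbT.
    - by rewrite -addrA -nu.
  move=> H; exact: (@hK R _ _ _ X0 (sqr_ge0 _) H key).
have hge : 1 - 2 * u <= h.
  have [u1|u1] := lerP (1 - u) 0; first by apply: le_trans; last exact: h0; lra.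
  suff : (1 - u) ^+ 2 <= h.
    have e : (1 - u) ^+ 2 = 1 - 2 * u + u ^+ 2 by ring.
    by have := sqr_ge0 u; lra.
  rewrite leNgt; apply/negP => hlt.
  have E1 : ((1 - u) ^+ 2) ^+ N = ((1 - u) ^+ n) ^+ (2 * n.-1).
    by rewrite -!exprM /N mulnCA.
  have L1 : h ^+ N < ((1 - u) ^+ n) ^+ (2 * n.-1).
    by rewrite -E1 ltrXn2r // -lt0n.
  have L2 : ((1 - u) ^+ n) ^+ (2 * n.-1) <= Pi ^+ (2 * n.-1).
    apply: lerXn2r.
    - by rewrite nnegrE exprn_ge0 // ltW.
    - by rewrite nnegrE prodr_ge0.
    - exact: le_trans (K u1) Pge.
  by have := lt_le_trans L1 (le_trans L2 AG); rewrite ltxx.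
have Qle : Q <= S ^+ 2 - nn * (nn - 1) * (1 - 2 * u).
  have : Q = S ^+ 2 - N%:R * h by rewrite /h mulrC divfK ?gt_eqF //; ring.
  move=> ->; rewrite -NR.
  have : N%:R * (1 - 2 * u) <= N%:R * h by rewrite ler_pM2l.
  lra.
have r1 : 1 <= r.
  rewrite leNgt; apply/negP => rlt.
  have : r ^+ n < 1 by rewrite (exprn_ilte1 R).2 // -lt0n (leq_trans _ n2).
  rewrite rn; apply/negP; rewrite -leNgt.
  by rewrite exprn_ege1 //; rewrite lerDl sqr_ge0.
set c := 2 * s ^+ 2 + s ^+ 4.
have rle : nn * r <= nn + c.
  rewrite leNgt; apply/negP => rlt.
  have x0 : 0 <= r - 1 by lra.
  have := @bern R (r - 1) n x0; rewrite (addrC 1 (r - 1)) subrK rn.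
  have : (1 + s ^+ 2) ^+ 2 = 1 + c by rewrite /c; ring.
  move=> ->; rewrite /nn in rlt; lra.
have S0 : 0 <= S by rewrite sumr_ge0.
set X := nn * r in Sle rle.
have X1 : nn <= X by rewrite /X ler_peMr // ltW.
have SS : S ^+ 2 - 2 * S <= X ^+ 2 - 2 * X by apply: hSS => //; lra.
have c0 : 0 <= c by rewrite /c addr_ge0 ?mulr_ge0 ?exprn_ge0 // ltW.
have XX : (X - 1) ^+ 2 <= (nn + c - 1) ^+ 2 by apply: hXX; lra.
set m := nn - 1.
have mE : (n - 1)%:R = m by rewrite natrB ?(leq_trans _ n2).
have tE : (n + 10)%:R / n%:R = (nn + 10) / nn by rewrite natrD.
rewrite mE tE.
set t := (nn + 10) / nn.
have mt : 6 <= m * t.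
  rewrite /t mulrA ler_pdivlMr // /m mulrC.
  by rewrite mulrC; apply: (@hmt R nn nn2).
have m1 : 1 <= m by rewrite /m; lra.
have LHS : Q - 2 * S + nn <= 2 * m * c + c ^+ 2 + 4 * m * s + 16 * m * s ^+ 2.
  have : nn * (nn - 1) * (1 - 2 * u) = nn * (nn - 1) - 2 * (nn - 1) * (nn * u) by ring.
  rewrite nu => HH; rewrite HH in Qle.
  have e1 : (X - 1) ^+ 2 = X ^+ 2 - 2 * X + 1 by ring.
  rewrite /m; lra.
apply: (le_trans LHS); apply: hfin => //.
exact: hc.
Qed.
Section S. Variable R : rcfType.
Lemma ReJ (b : R[i]) : complex.Re (b^*) = complex.Re b.
Proof. by case: b. Qed.
Lemma ImJ (b : R[i]) : complex.Im (b^*) = - complex.Im b.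
Proof. by case: b. Qed.
Lemma ReD (a b : R[i]) : complex.Re (a + b) = complex.Re a + complex.Re b.
Proof. by case: a; case: b. Qed.
Lemma ImD (a b : R[i]) : complex.Im (a + b) = complex.Im a + complex.Im b.
Proof. by case: a; case: b. Qed.
Lemma ReM (a b : R[i]) : complex.Re (a * b) = complex.Re a * complex.Re b - complex.Im a * complex.Im b.
Proof. by case: a; case: b. Qed.
Lemma ImM (a b : R[i]) : complex.Im (a * b) = complex.Re a * complex.Im b + complex.Im a * complex.Re b.
Proof. by case: a; case: b. Qed.
Lemma ReC (a : R) : complex.Re (real_complex R a) = a. Proof. by []. Qed.
Lemma ImC (a : R) : complex.Im (real_complex R a) = 0. Proof. by []. Qed.

Lemma Re_sum (I : Type) (s : seq I) (P : pred I) (F : I -> R[i]) :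
  complex.Re (\sum_(i <- s | P i) F i) = \sum_(i <- s | P i) complex.Re (F i).
Proof. exact: (big_morph _ (@ReD) (erefl _)). Qed.
Lemma Im_sum (I : Type) (s : seq I) (P : pred I) (F : I -> R[i]) :
  complex.Im (\sum_(i <- s | P i) F i) = \sum_(i <- s | P i) complex.Im (F i).
Proof. exact: (big_morph _ (@ImD) (erefl _)). Qed.

Lemma Re_quad n (A : 'M[R]_n) (P : 'M[R[i]]_n) j :
  complex.Re ((P *m map_mx (real_complex R) A *m (map_mx Num.conj P^T)) j j) =
  ((\row_k complex.Re (P j k)) *m A *m (\row_k complex.Re (P j k))^T) 0 0 +
  ((\row_k complex.Im (P j k)) *m A *m (\row_k complex.Im (P j k))^T) 0 0.
Proof.
rewrite !mxE Re_sum -big_split /=; apply: eq_bigr => l _.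
rewrite !mxE ReM ReJ ImJ Re_sum Im_sum !mulr_suml -big_split /=.
rewrite -sumrN -big_split /=; apply: eq_bigr => k _.
rewrite !mxE ReM ImM ReC ImC /=; ring.
Qed.
End S.
Section T. Variable R : rcfType.
Lemma eig_real n (A : 'M[R]_n) : A^T = A -> (forall v : 'rV[R]_n, 0 <= (v *m A *m v^T) 0 0) ->
  exists l : 'I_n -> R, [/\ forall i, 0 <= l i, \tr A = \sum_i l i, \det A = \prod_i l i & \tr (A *m A) = \sum_i l i ^+ 2].
Proof.
move=> As Apsd.
set AC := map_mx (real_complex R) A.
have herm : AC \is hermsymmx.
  rewrite is_hermitianmxE expr0 scale1r; apply/eqP/matrixP => i j.
  rewrite !mxE conj_Creal ?complex_real // -{1}As mxE //.
have := hermitian_spectral_diag_real herm.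
have /orthomx_spectralP AE := hermitian_normalmx herm.
move: AE; set P := spectralmx AC; set d := spectral_diag AC => AE dreal.
have Pu : P \in unitmx := spectral_unit AC.
have Pinv : invmx P = map_mx Num.conj P^T := invmx_unitary (spectral_unitarymx AC).
have dR j : d 0 j = real_complex R (complex.Re (d 0 j)).
  by rewrite RRe_real //; apply: (mxOverP dreal).
have fI := @complexI R.
exists (fun j => complex.Re (d 0 j)); split.
- move=> j.
  have DE : diag_mx d = P *m AC *m invmx P.
    by rewrite AE !mulmxA mulmxV // mul1mx -mulmxA mulmxV // mulmx1.
  have := @Re_quad R n A P j; rewrite -Pinv -DE mxE eqxx mulr1n => ->.
  by rewrite addr_ge0 // Apsd.
- apply: fI; rewrite -trace_map_mx -/AC AE mxtrace_mulC mulmxA mulmxV // mul1mx mxtrace_diag.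
  by rewrite rmorph_sum; apply: eq_bigr => j _; exact: dR.
- apply: fI; rewrite -det_map_mx -/AC AE !det_mulmx det_inv mulrAC mulVr ?mul1r; last by rewrite -unitmxE.
  by rewrite det_diag rmorph_prod; apply: eq_bigr => j _; exact: dR.
- apply: fI; rewrite -trace_map_mx map_mxM -/AC AE.
  rewrite -!mulmxA (mulmxA P) mulmxV // mul1mx !mulmxA mxtrace_mulC !mulmxA mulmxV // mul1mx.
  rewrite mulmx_diag mxtrace_diag rmorph_sum; apply: eq_bigr => j _.
  by rewrite mxE rmorphXn /= -dR expr2.
Qed.
End T.

Lemma hs12 (R : realFieldType) (s : R) : 0 < s -> s ^+ 2 <= 4^-1 -> s <= 2^-1.
Proof. move=> *; nra. Qed.

Theorem propositionA1 (R : rcfType) (n : nat) (eta r : R) (A : 'M[R]_n) :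
  (2 <= n)%N ->
  0 < eta -> eta <= 4^-1 ->
  0 <= r -> r ^+ n = (1 + eta) ^+ 2 ->
  symmetric_mx A -> psd_mx A ->
  (1 - Num.sqrt eta) ^+ 2 <= \det A ->
  \tr A <= n%:R * r ->
  hs_norm2 (A - 1%:M) <=
    4 * ((n - 1)%:R) ^+ 2 * Num.sqrt eta
      * (1 + (n + 10)%:R / n%:R * Num.sqrt eta).
Proof.
move=> n2 eta0 eta14 r0 rn As Apsd detA trA.
have [l [l0 trE detE trAA]] := @eig_real R n A As Apsd.
set s := Num.sqrt eta in detA *.
have s0 : 0 < s by rewrite sqrtr_gt0.
have ss : s ^+ 2 = eta by rewrite sqr_sqrtr // ltW.
have s12 : s <= 2^-1 by apply: hs12 => //; rewrite ss.
rewrite -ss in rn.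
have -> : hs_norm2 (A - 1%:M) = \tr (A *m A) - 2 * \tr A + n%:R.
  rewrite /hs_norm2.
  have -> : (A - 1%:M)^T = A - 1%:M by rewrite linearB /= trmx1 As.
  rewrite mulmxBl !mulmxBr mulmx1 mul1mx mulmx1.
  rewrite !raddfB /= mxtrace1; ring.
rewrite trAA trE; apply: (@scalar_bound R n s r l) => //.
- by rewrite -detE.
- by rewrite -trE.
Qed.
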